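(* If $h:[0,\infty)\to[\frac{\beta u_0-1}{r},\frac{\beta u_0}{r}]$ is a decreasing solution to the HJB equation with $h'(0)=0$, then there exist $z_f\in(0,d]$, $z_g\in[d,\infty)$ and real constants $A_1,B_1,A_2,B_2,a_1,b_1,a_2,b_2$ such that, with $\underline f(z)=A_1e^{\theta_1(0)z}+B_1e^{-\theta_2(0)z}$, $\bar f(z)=\frac{\beta u_0}{r}+A_2e^{\theta_1(u_0)z}+B_2e^{-\theta_2(u_0)z}$, $\underline g(z)=-\frac1r+a_1e^{\theta_1(0)z}+b_1e^{-\theta_2(0)z}$, $\bar g(z)=\frac{\beta u_0-1}{r}+a_2e^{\theta_1(u_0)z}+b_2e^{-\theta_2(u_0)z}$, $$h=\bar f\,\mathbf 1_{[0,z_f]}+\underline f\,\mathbf 1_{(z_f,d]}+\underline g\,\mathbf 1_{(d,z_g]}+\bar g\,\mathbf 1_{[z_g,\infty)\cap(d,\infty)}.$$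
   Context: Fix $\mu\in\mathbb R$, $\sigma>0$, $u_0>0$, $r>0$, $\beta>0$, $d>0$. For $u\in[0,u_0]$ let $\theta_1(u)=\frac{\sqrt{(\mu-u)^2+2r\sigma^2}+(\mu-u)}{\sigma^2}$ and $\theta_2(u)=\frac{\sqrt{(\mu-u)^2+2r\sigma^2}-(\mu-u)}{\sigma^2}$. The HJB equation is $$-rh(z)-\mu h'(z)+\tfrac{\sigma^2}{2}h''(z)+\sup_{u\in[0,u_0]}\{(\beta+h'(z))u\}=\mathbf 1_{\{z>d\}}.$$ A solution to the HJB equation is a function $h:[0,\infty)\to[\frac{\beta u_0-1}{r},\frac{\beta u_0}{r}]$ that is continuously differentiable on $[0,\infty)$, twice continuously differentiable on $[0,d]$ and on $(d,\infty)$ respectively (with $h'(0),h''(0)$ the right derivatives and $h''(d)$ the left second derivative), and satisfies the HJB equation for all $z\ge0$. *)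

(* Defs.v *)
From Stdlib Require Import Reals.
From Coquelicot Require Import Coquelicot.
Open Scope R_scope.

Definition theta1 (mu sigma r u : R) : R :=
  (sqrt ((mu - u)^2 + 2 * r * sigma^2) + (mu - u)) / sigma^2.
Definition theta2 (mu sigma r u : R) : R :=
  (sqrt ((mu - u)^2 + 2 * r * sigma^2) - (mu - u)) / sigma^2.

Definition right_deriv (f : R -> R) (x l : R) : Prop :=
  filterlim (fun t => (f (x + t) - f x) / t) (at_right 0) (locally l).
Definition left_deriv (f : R -> R) (x l : R) : Prop :=
  filterlim (fun t => (f (x + t) - f x) / t) (at_left 0) (locally l).

Definition is_sup_ctrl (u0 beta p S : R) : Prop :=
  is_lub (fun y => exists u, 0 <= u <= u0 /\ y = (beta + p) * u) S.

Definition ind_gt (d z : R) : R := if Rlt_dec d z then 1 else 0.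

(* h is a solution of the HJB equation, with h1 = h' and h2 = h''
   (h1 0, h2 0 right derivatives; h2 d the left second derivative). *)
Definition HJB_solution (mu sigma u0 r beta d : R) (h h1 h2 : R -> R) : Prop :=
  (forall z, 0 <= z -> (beta * u0 - 1) / r <= h z <= beta * u0 / r) /\
  right_deriv h 0 (h1 0) /\
  (forall z, 0 < z -> is_derive h z (h1 z)) /\
  filterlim h1 (at_right 0) (locally (h1 0)) /\
  (forall z, 0 < z -> continuous h1 z) /\
  right_deriv h1 0 (h2 0) /\
  (forall z, 0 < z < d -> is_derive h1 z (h2 z)) /\
  left_deriv h1 d (h2 d) /\
  filterlim h2 (at_right 0) (locally (h2 0)) /\
  (forall z, 0 < z < d -> continuous h2 z) /\
  filterlim h2 (at_left d) (locally (h2 d)) /\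
  (forall z, d < z -> is_derive h1 z (h2 z)) /\
  (forall z, d < z -> continuous h2 z) /\
  (forall z, 0 <= z -> exists S, is_sup_ctrl u0 beta (h1 z) S /\
      - r * h z - mu * h1 z + sigma^2 / 2 * h2 z + S = ind_gt d z).

(* Main.v *)
From Stdlib Require Import Reals Lra Classical.
From Coquelicot Require Import Coquelicot.
Open Scope R_scope.
Require Import Defs.

Lemma ball_R (x e y : R) : ball x e y <-> Rabs (y - x) < e.
Proof. unfold ball; simpl; unfold AbsRing_ball, abs, minus, plus, opp; simpl. tauto. Qed.

Lemma cont_eps (f : R -> R) x : continuous f x ->
  forall eps, 0 < eps -> exists del, 0 < del /\ forall t, Rabs (t - x) < del -> Rabs (f t - f x) < eps.
Proof.
  intros H eps Heps.
  destruct (proj1 (filterlim_locally f (f x)) H (mkposreal eps Heps)) as [del Hd].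
  exists del. split. apply cond_pos. intros t Ht. apply ball_R. apply Hd. apply ball_R. exact Ht.
Qed.

Lemma rlim_eps (f : R -> R) x l : filterlim f (at_right x) (locally l) ->
  forall eps, 0 < eps -> exists del, 0 < del /\ forall t, x < t < x + del -> Rabs (f t - l) < eps.
Proof.
  intros H eps Heps.
  destruct (proj1 (filterlim_locally f l) H (mkposreal eps Heps)) as [del Hd].
  exists del. split. apply cond_pos. intros t Ht. apply ball_R. apply Hd. apply ball_R.
  rewrite Rabs_right; simpl; lra. lra.
Qed.

Lemma der_cont (f : R -> R) x l : is_derive f x l -> continuous f x.
Proof. intros H. apply (ex_derive_continuous (V:=R_NormedModule)). exists l. exact H. Qed.
Open Scope R_scope.

Lemma sup_neg u0 beta P S : is_sup_ctrl u0 beta P S -> 0 < u0 -> beta + P < 0 -> S = 0.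
Proof.
  intros [Hub Hl] Hu Hn.
  assert (0 <= S). { apply Hub. exists 0. split. lra. ring. }
  assert (S <= 0). { apply Hl. intros y [u [Hu' ->]]. nra. }
  lra.
Qed.

Lemma sup_pos u0 beta P S : is_sup_ctrl u0 beta P S -> 0 < u0 -> 0 <= beta + P -> S = (beta + P) * u0.
Proof.
  intros [Hub Hl] Hu Hn.
  assert ((beta + P) * u0 <= S). { apply Hub. exists u0. split. lra. ring. }
  assert (S <= (beta + P) * u0). { apply Hl. intros y [u [Hu' ->]]. nra. }
  lra.
Qed.

Lemma ext_right (f g : R -> R) x del : 0 < del ->
  (forall eps, 0 < eps -> exists eta, 0 < eta /\ forall t, x < t < x + eta -> Rabs (f t - f x) < eps) ->
  (forall eps, 0 < eps -> exists eta, 0 < eta /\ forall t, x < t < x + eta -> Rabs (g t - g x) < eps) ->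
  (forall t, x < t < x + del -> f t = g t) -> f x = g x.
Proof.
  intros Hd Hf Hg He. apply NNPP; intro Hne.
  assert (Hp : 0 < Rabs (f x - g x) / 2).
  { assert (f x - g x <> 0) by lra. pose proof (Rabs_pos_lt _ H). lra. }
  destruct (Hf _ Hp) as [e1 [He1 H1]]. destruct (Hg _ Hp) as [e2 [He2 H2]].
  set (m := Rmin del (Rmin e1 e2)).
  assert (0 < m) by (unfold m; repeat apply Rmin_pos; lra).
  assert (m <= del /\ m <= e1 /\ m <= e2).
  { unfold m. split. apply Rmin_l. split. eapply Rle_trans. apply Rmin_r. apply Rmin_l.
    eapply Rle_trans. apply Rmin_r. apply Rmin_r. }
  set (t := x + m / 2).
  specialize (H1 t ltac:(unfold t; lra)). specialize (H2 t ltac:(unfold t; lra)).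
  rewrite He in H1 by (unfold t; lra).
  assert (Rabs (f x - g x) <= Rabs (g t - f x) + Rabs (g t - g x)).
  { replace (f x - g x) with (-(g t - f x) + (g t - g x)) by ring.
    eapply Rle_trans. apply Rabs_triang. rewrite Rabs_Ropp. lra. }
  lra.
Qed.

Lemma ext_left (f g : R -> R) x del : 0 < del ->
  (forall eps, 0 < eps -> exists eta, 0 < eta /\ forall t, x - eta < t < x -> Rabs (f t - f x) < eps) ->
  (forall eps, 0 < eps -> exists eta, 0 < eta /\ forall t, x - eta < t < x -> Rabs (g t - g x) < eps) ->
  (forall t, x - del < t < x -> f t = g t) -> f x = g x.
Proof.
  intros Hd Hf Hg He. apply NNPP; intro Hne.
  assert (Hp : 0 < Rabs (f x - g x) / 2).
  { assert (f x - g x <> 0) by lra. pose proof (Rabs_pos_lt _ H). lra. }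
  destruct (Hf _ Hp) as [e1 [He1 H1]]. destruct (Hg _ Hp) as [e2 [He2 H2]].
  set (m := Rmin del (Rmin e1 e2)).
  assert (0 < m) by (unfold m; repeat apply Rmin_pos; lra).
  assert (m <= del /\ m <= e1 /\ m <= e2).
  { unfold m. split. apply Rmin_l. split. eapply Rle_trans. apply Rmin_r. apply Rmin_l.
    eapply Rle_trans. apply Rmin_r. apply Rmin_r. }
  set (t := x - m / 2).
  specialize (H1 t ltac:(unfold t; lra)). specialize (H2 t ltac:(unfold t; lra)).
  rewrite He in H1 by (unfold t; lra).
  assert (Rabs (f x - g x) <= Rabs (g t - f x) + Rabs (g t - g x)).
  { replace (f x - g x) with (-(g t - f x) + (g t - g x)) by ring.
    eapply Rle_trans. apply Rabs_triang. rewrite Rabs_Ropp. lra. }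
  lra.
Qed.

Lemma const_on (I : R -> Prop) (f : R -> R) :
  (forall x y t, I x -> I y -> x <= t <= y -> I t) ->
  (forall z, I z -> is_derive f z 0) -> forall x y, I x -> I y -> f x = f y.
Proof.
  intros Hc Hd.
  assert (forall x y, I x -> I y -> x < y -> f x = f y).
  { intros x y Hx Hy Hxy.
    assert (HD : forall c, x <= c <= y -> derivable_pt_lim f c ((fun _ => 0) c)).
    { intros c Hc'. apply is_derive_Reals. apply Hd. exact (Hc x y c Hx Hy Hc'). }
    destruct (MVT_cor2 f (fun _ => 0) x y Hxy HD) as [c [Hc1 _]].
    lra. }
  intros x y Hx Hy. destruct (Rtotal_order x y) as [Hl|[He|Hg]].
  auto. subst; auto. symmetry; auto.
Qed.

Lemma ode_form mu sigma r u c (h p q : R -> R) (I : R -> Prop) :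
  0 < sigma -> 0 < r ->
  (forall x y t, I x -> I y -> x <= t <= y -> I t) ->
  (forall z, I z -> is_derive h z (p z) /\ is_derive p z (q z) /\
      sigma^2/2 * q z - (mu - u) * p z - r * (h z - c) = 0) ->
  exists A B, forall z, I z ->
    h z = c + A * exp (theta1 mu sigma r u * z) + B * exp (- theta2 mu sigma r u * z).
Proof.
  intros Hs Hr Hc HI.
  set (t1 := theta1 mu sigma r u). set (t2 := theta2 mu sigma r u).
  set (s := sqrt ((mu - u)^2 + 2 * r * sigma^2)).
  assert (Hsg : 0 < sigma^2) by (apply pow_lt; lra).
  assert (Hrs : 0 < r * sigma^2) by (apply Rmult_lt_0_compat; lra).
  assert (Hpos : 0 < (mu - u)^2 + 2 * r * sigma^2) by (pose proof (pow2_ge_0 (mu - u)); lra).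
  assert (Hs0 : 0 < s) by (apply sqrt_lt_R0; exact Hpos).
  assert (Hss : s * s = (mu - u)^2 + 2 * r * sigma^2) by (apply sqrt_sqrt; lra).
  assert (Ed : t1 - t2 = 2 * (mu - u) / sigma^2) by (unfold t1, t2, theta1, theta2; fold s; field; lra).
  assert (Ep : t1 * t2 = 2 * r / sigma^2).
  { unfold t1, t2, theta1, theta2; fold s. field_simplify_eq. 2: lra.
    replace (s^2) with (s*s) by ring. rewrite Hss. ring. }
  assert (Es : t1 + t2 = 2 * s / sigma^2) by (unfold t1, t2, theta1, theta2; fold s; field; lra).
  assert (Hts : 0 < t1 + t2). { rewrite Es. apply Rdiv_lt_0_compat; lra. }
  assert (Hq : forall z, I z -> q z = (t1 - t2) * p z + t1 * t2 * (h z - c)).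
  { intros z Hz. destruct (HI z Hz) as [_ [_ E]]. rewrite Ed, Ep. field_simplify_eq. 2: lra. lra. }
  destruct (classic (exists z0, I z0)) as [[z0 Hz0]|Hn].
  2: { exists 0, 0. intros z Hz. exfalso. apply Hn. exists z. exact Hz. }
  set (F := fun z => (p z + t2 * (h z - c)) * exp (- t1 * z)).
  assert (HF : forall z, I z -> F z = F z0).
  { intros z1 Hz1. apply const_on with (I := I); [exact Hc | | exact Hz1 | exact Hz0].
    intros z Hz. destruct (HI z Hz) as [Hh [Hp _]]. unfold F.
     auto_derive. 
    - split. exists (q z); exact Hp. split. exists (p z); exact Hh. auto.
    - replace (Derive (fun x => p x) z) with (q z) by (symmetry; apply is_derive_unique; exact Hp).
      replace (Derive (fun x => h x) z) with (p z) by (symmetry; apply is_derive_unique; exact Hh).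
      rewrite (Hq z Hz). ring. }
  set (C1 := F z0).
  assert (HF' : forall z, I z -> p z + t2 * (h z - c) = C1 * exp (t1 * z)).
  { intros z Hz. unfold C1; rewrite <- (HF z Hz). unfold F.
    rewrite Rmult_assoc, <- exp_plus. replace (- t1 * z + t1 * z) with 0 by ring. rewrite exp_0. ring. }
  set (A := C1 / (t1 + t2)).
  set (G := fun z => (h z - c) * exp (t2 * z) - A * exp ((t1 + t2) * z)).
  assert (HG : forall z, I z -> G z = G z0).
  { intros z1 Hz1. apply const_on with (I := I); [exact Hc | | exact Hz1 | exact Hz0].
    intros z Hz. destruct (HI z Hz) as [Hh [Hp _]]. unfold G.
    auto_derive.
    - exists (p z); exact Hh.
    - replace (Derive (fun x => h x) z) with (p z) by (symmetry; apply is_derive_unique; exact Hh).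
      replace ((t1 + t2) * z) with (t1 * z + t2 * z) by ring. rewrite exp_plus.
      replace (p z) with (C1 * exp (t1 * z) - t2 * (h z - c)) by (rewrite <- (HF' z Hz); ring).
      unfold A. field. lra. }
  exists A, (G z0). intros z Hz. rewrite <- (HG z Hz). unfold G.
  replace ((t1 + t2) * z) with (t1 * z + t2 * z) by ring. rewrite exp_plus.
  replace (- t2 * z) with (- (t2 * z)) by ring. rewrite exp_Ropp.
  assert (exp (t2 * z) <> 0) by (apply Rgt_not_eq; apply exp_pos).
  field. exact H.
Qed.

Lemma nodip (mu sigma r beta e : R) (h p q : R -> R) x0 z1 z2 :
  0 < sigma -> 0 < r -> 0 < beta -> x0 < z1 < z2 ->
  (forall t, x0 <= t <= z2 -> continuous p t) ->
  (forall t, x0 < t < z2 -> is_derive h t (p t) /\ is_derive p t (q t)) ->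
  (forall t, x0 < t < z2 -> beta + p t < 0 -> - r * h t - mu * p t + sigma^2/2 * q t = e) ->
  -beta <= p x0 -> p z1 < -beta -> -beta <= p z2 -> False.
Proof.
  intros Hs Hr Hb Hz Hcont Hder Hode H0 H1 H2.
  destruct (continuity_ab_min p x0 z2) as [c [Hmin Hc]]. lra.
  { intros t Ht. apply continuity_pt_filterlim. apply Hcont. exact Ht. }
  assert (Hpc : p c <= p z1) by (apply Hmin; lra).
  assert (c <> x0) by (intro; subst; lra).
  assert (c <> z2) by (intro; subst; lra).
  assert (Hc' : x0 < c < z2) by lra.
  destruct (Hder c Hc') as [Hhc Hpc'].
  assert (Hq0 : q c = 0).
  { pose proof (proj1 (is_derive_Reals _ _ _) Hpc') as Hl.
    pose proof (deriv_minimum p x0 z2 c (exist _ (q c) Hl) (proj1 Hc') (proj2 Hc')) as Hm.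
    simpl in Hm. apply Hm. intros x Hx1 Hx2. apply Hmin. lra. }
  assert (Hec : - r * h c - mu * p c = e).
  { rewrite <- (Hode c Hc' ltac:(lra)). rewrite Hq0. ring. }
  set (g := fun t => r * h t + mu * p t).
  assert (Hg : derivable_pt_lim g c (r * p c + mu * q c)).
  { apply is_derive_Reals. unfold g.
    apply (is_derive_plus (fun t => r * h t) (fun t => mu * p t)).
    apply is_derive_scal; exact Hhc. apply is_derive_scal; exact Hpc'. }
  rewrite Hq0, Rmult_0_r, Rplus_0_r in Hg.
  assert (Heps : 0 < - r * p c / 2) by nra.
  destruct (Hg _ Heps) as [d1 Hd1].
  assert (Heps2 : 0 < - beta - p c) by lra.
  destruct (cont_eps p c (Hcont c ltac:(lra)) _ Heps2) as [d2 [Hd2 Hd2']].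
  set (m := Rmin d1 (Rmin d2 (c - x0))).
  assert (0 < m) by (unfold m; repeat apply Rmin_pos; try apply cond_pos; lra).
  assert (m <= d1 /\ m <= d2 /\ m <= c - x0).
  { unfold m. split. apply Rmin_l. split. eapply Rle_trans. apply Rmin_r. apply Rmin_l.
    eapply Rle_trans. apply Rmin_r. apply Rmin_r. }
  set (a := c - m / 2).
  assert (Hqpos : forall t, a < t < c -> 0 < q t).
  { intros t Ht.
    assert (Hk : t - c <> 0) by (unfold a in Ht; lra).
    assert (Hk2 : Rabs (t - c) < d1) by (rewrite Rabs_left; unfold a in Ht; lra).
    specialize (Hd1 (t - c) Hk Hk2). replace (c + (t - c)) with t in Hd1 by ring.
    assert (Hpt : p t < - beta).
    { assert (Hr2 : Rabs (t - c) < d2) by (rewrite Rabs_left; unfold a in Ht; lra).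
      specialize (Hd2' t Hr2). apply Rabs_def2 in Hd2'. lra. }
    assert (Ht' : x0 < t < z2) by (unfold a in Ht; lra).
    specialize (Hode t Ht' ltac:(lra)).
    apply Rabs_def2 in Hd1. destruct Hd1 as [Hd1a Hd1b].
    set (Q := (g t - g c) / (t - c)) in *.
    assert (HQ : g t - g c = Q * (t - c)) by (unfold Q; field; exact Hk).
    assert (Q < 0) by lra.
    assert (0 < g t - g c) by (rewrite HQ; apply Rmult_lt_0_compat_neg; unfold a in Ht; lra) || nra.
    unfold g in *.
    assert (Hsg : 0 < sigma^2) by (apply pow_lt; lra).
    nra. }
  assert (Ha : a < c) by (unfold a; lra).
  destruct (MVT_cor2 p q a c Ha) as [xi [Hxi1 Hxi2]].
  { intros t Ht. apply is_derive_Reals. apply Hder. unfold a in Ht; lra. }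
  specialize (Hqpos xi Hxi2).
  assert (p c <= p a) by (apply Hmin; unfold a; lra).
  nra.
Qed.

Lemma unbdd (h p : R -> R) beta L z1 : 0 < beta ->
  (forall z, z1 <= z -> is_derive h z (p z) /\ p z < - beta) ->
  (forall z, z1 <= z -> L <= h z) -> False.
Proof.
  intros Hb Hd HL.
  assert (HL1 := HL z1 (Rle_refl _)).
  set (t := (h z1 - L) / beta + 1).
  assert (Ht : beta * t = h z1 - L + beta) by (unfold t; field; lra).
  assert (0 < t) by (unfold t; assert (0 <= (h z1 - L) / beta) by (apply Rdiv_le_0_compat; lra); lra).
  destruct (MVT_cor2 h p z1 (z1 + t)) as [xi [Hxi1 Hxi2]]. lra.
  { intros c Hc. apply is_derive_Reals. apply Hd. lra. }
  assert (p xi < - beta) by (apply Hd; lra).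
  assert (HL2 := HL (z1 + t) ltac:(lra)).
  nra.
Qed.

Lemma cont_right_eps (f : R -> R) x : continuous f x ->
  forall eps, 0 < eps -> exists eta, 0 < eta /\ forall t, x < t < x + eta -> Rabs (f t - f x) < eps.
Proof.
  intros H eps He. destruct (cont_eps f x H eps He) as [d [Hd Hd']]. exists d. split; auto.
  intros t Ht. apply Hd'. rewrite Rabs_right; lra.
Qed.

Lemma cont_left_eps (f : R -> R) x : continuous f x ->
  forall eps, 0 < eps -> exists eta, 0 < eta /\ forall t, x - eta < t < x -> Rabs (f t - f x) < eps.
Proof.
  intros H eps He. destruct (cont_eps f x H eps He) as [d [Hd Hd']]. exists d. split; auto.
  intros t Ht. apply Hd'. rewrite Rabs_left; lra.
Qed.

Lemma rd_cont (f : R -> R) l : right_deriv f 0 l ->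
  forall eps, 0 < eps -> exists eta, 0 < eta /\ forall t, 0 < t < 0 + eta -> Rabs (f t - f 0) < eps.
Proof.
  intros H eps He.
  destruct (rlim_eps _ 0 l H 1 Rlt_0_1) as [d [Hd H']].
  assert (Hl : 0 < Rabs l + 1) by (pose proof (Rabs_pos l); lra).
  exists (Rmin d (eps / (Rabs l + 1))). split.
  { apply Rmin_pos. lra. apply Rdiv_lt_0_compat; lra. }
  intros t Ht.
  assert (Hm1 := Rmin_l d (eps / (Rabs l + 1))).
  assert (Hm2 := Rmin_r d (eps / (Rabs l + 1))).
  specialize (H' t ltac:(lra)). rewrite Rplus_0_l in H'.
  set (Q := (f t - f 0) / t) in *.
  assert (HQ : f t - f 0 = Q * t) by (unfold Q; field; lra).
  rewrite HQ, Rabs_mult, (Rabs_right t) by lra.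
  assert (Rabs Q < Rabs l + 1).
  { replace Q with ((Q - l) + l) by ring. eapply Rle_lt_trans. apply Rabs_triang. lra. }
  assert (t * (Rabs l + 1) < eps).
  { assert (t < eps / (Rabs l + 1)) by lra.
    apply (Rmult_lt_compat_r (Rabs l + 1)) in H1; [|lra].
    replace (eps / (Rabs l + 1) * (Rabs l + 1)) with eps in H1 by (field; lra). lra. }
  pose proof (Rabs_pos Q). nra.
Qed.

Lemma sup_nonpos u0 beta P S : is_sup_ctrl u0 beta P S -> 0 < u0 -> beta + P <= 0 -> S = 0.
Proof.
  intros H Hu Hn. destruct (Rle_lt_or_eq_dec _ _ Hn) as [Hl|He].
  - eapply sup_neg; eauto.
  - rewrite (sup_pos u0 beta P S H Hu) by lra. rewrite He. ring.
Qed.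

Lemma ind0 d z : z <= d -> ind_gt d z = 0.
Proof. intros H. unfold ind_gt. destruct (Rlt_dec d z); lra. Qed.
Lemma ind1 d z : d < z -> ind_gt d z = 1.
Proof. intros H. unfold ind_gt. destruct (Rlt_dec d z); lra. Qed.

Theorem lemma2p3 (mu sigma u0 r beta d : R) (h h1 h2 : R -> R) :
  0 < sigma -> 0 < u0 -> 0 < r -> 0 < beta -> 0 < d ->
  HJB_solution mu sigma u0 r beta d h h1 h2 ->
  (forall x y, 0 <= x -> x <= y -> h y <= h x) ->
  h1 0 = 0 ->
  exists zf zg A1 B1 A2 B2 a1 b1 a2 b2 : R,
    0 < zf <= d /\ d <= zg /\
    let fl := fun z => A1 * exp (theta1 mu sigma r 0 * z)
                       + B1 * exp (- theta2 mu sigma r 0 * z) in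
    let fb := fun z => beta * u0 / r + A2 * exp (theta1 mu sigma r u0 * z)
                       + B2 * exp (- theta2 mu sigma r u0 * z) in
    let gl := fun z => - (1 / r) + a1 * exp (theta1 mu sigma r 0 * z)
                       + b1 * exp (- theta2 mu sigma r 0 * z) in
    let gb := fun z => (beta * u0 - 1) / r + a2 * exp (theta1 mu sigma r u0 * z)
                       + b2 * exp (- theta2 mu sigma r u0 * z) in
    (forall z, 0 <= z <= zf -> h z = fb z) /\
    (forall z, zf < z <= d -> h z = fl z) /\
    (forall z, d < z <= zg -> h z = gl z) /\
    (forall z, zg <= z -> d < z -> h z = gb z).
Proof.
  intros Hs Hu Hr Hb Hd HJB Hdec H10.
  destruct HJB as [Hrange [Hrd0 [Hder [Hc0 [Hcont [Hrd1 [Hder2a [Hld [Hc20 [Hc2a [Hc2d [Hder2b [Hc2b Hhjb]]]]]]]]]]]]].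
  assert (Hch : forall z, 0 < z -> continuous h z) by (intros z Hz; eapply der_cont; apply Hder; exact Hz).
  assert (Hode0 : forall z, 0 < z -> beta + h1 z < 0 ->
            - r * h z - mu * h1 z + sigma^2/2 * h2 z = ind_gt d z).
  { intros z Hz Hn. destruct (Hhjb z ltac:(lra)) as [S [HS E]].
    rewrite (sup_neg _ _ _ _ HS Hu Hn) in E. lra. }
  assert (Hodep : forall z, 0 < z -> 0 <= beta + h1 z ->
            - r * h z - mu * h1 z + sigma^2/2 * h2 z + (beta + h1 z) * u0 = ind_gt d z).
  { intros z Hz Hn. destruct (Hhjb z ltac:(lra)) as [S [HS E]].
    rewrite (sup_pos _ _ _ _ HS Hu Hn) in E. lra. }
  assert (Hodem : forall z, 0 < z -> beta + h1 z <= 0 ->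
            - r * h z - mu * h1 z + sigma^2/2 * h2 z = ind_gt d z).
  { intros z Hz Hn. destruct (Hhjb z ltac:(lra)) as [S [HS E]].
    rewrite (sup_nonpos _ _ _ _ HS Hu Hn) in E. lra. }
  destruct (rlim_eps h1 0 (h1 0) Hc0 beta Hb) as [d0 [Hd0 Hd0']].
  set (E := fun x => 0 < x <= d /\ forall t, 0 < t <= x -> - beta <= h1 t).
  set (e0 := Rmin (d0 / 2) d).
  assert (He0 : 0 < e0) by (unfold e0; apply Rmin_pos; lra).
  assert (HE0 : E e0).
  { split. split. lra. apply Rmin_r. intros t Ht.
    assert (t <= d0 / 2) by (eapply Rle_trans; [apply Ht | apply Rmin_l]).
    specialize (Hd0' t ltac:(lra)). rewrite H10 in Hd0'. apply Rabs_def2 in Hd0'. lra. }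
  destruct (completeness E) as [zf [Hub Hlub]].
  { exists d. intros x Hx. apply Hx. }
  { exists e0. exact HE0. }
  assert (Hzf0 : e0 <= zf) by (apply Hub; exact HE0).
  assert (Hzfd : zf <= d) by (apply Hlub; intros x Hx; apply Hx).
  assert (F1 : forall t, 0 < t < zf -> - beta <= h1 t).
  { intros t Ht. apply Rnot_lt_le. intro Hlt.
    assert (zf <= t).
    { apply Hlub. intros x Hx. apply Rnot_lt_le. intro Hxt.
      assert (- beta <= h1 t) by (apply Hx; lra). lra. }
    lra. }
  assert (F2 : - beta <= h1 zf).
  { apply Rnot_lt_le. intro Hlt.
    assert (Heps : 0 < - beta - h1 zf) by lra.
    destruct (cont_eps h1 zf (Hcont zf ltac:(lra)) _ Heps) as [dl [Hdl Hdl']].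
    set (t := zf - Rmin dl zf / 2).
    assert (Hm1 := Rmin_l dl zf). assert (Hm2 := Rmin_r dl zf).
    assert (0 < Rmin dl zf) by (apply Rmin_pos; lra).
    assert (Rabs (t - zf) < dl) by (unfold t; rewrite Rabs_left; lra).
    specialize (Hdl' t H0). apply Rabs_def2 in Hdl'.
    assert (- beta <= h1 t) by (apply F1; unfold t; lra). lra. }
  assert (F3 : forall t, zf < t <= d -> h1 t <= - beta).
  { intros t Ht. apply Rnot_lt_le. intro Hlt.
    destruct (classic (exists z', zf < z' < t /\ h1 z' < - beta)) as [[z' [Hz' Hz'b]]|Hn].
    - apply (nodip mu sigma r beta 0 h h1 h2 zf z' t Hs Hr Hb Hz').
      + intros s Hs'. apply Hcont. lra.
      + intros s Hs'. split. apply Hder; lra. apply Hder2a; lra.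
      + intros s Hs' Hn. rewrite <- (ind0 d s) by lra. apply Hode0; lra.
      + exact F2.
      + exact Hz'b.
      + lra.
    - assert (E t).
      { split. lra. intros s Hs'.
        destruct (Rlt_le_dec s zf). apply F1; lra.
        destruct (Rle_lt_or_eq_dec _ _ r0). 2: { subst; exact F2. }
        destruct (Rle_lt_or_eq_dec _ _ (proj2 Hs')). 2: { subst; lra. }
        apply Rnot_lt_le. intro. apply Hn. exists s. split. lra. exact H. }
      assert (t <= zf) by (apply Hub; exact H). lra. }
  set (L := (beta * u0 - 1) / r).
  assert (HL : forall z, 0 <= z -> L <= h z) by (intros z Hz; apply Hrange; exact Hz).
  assert (CB : forall x0, d < x0 -> - beta <= h1 x0 -> forall z, x0 < z -> - beta <= h1 z).
  { intros x0 Hx0 Hp0 z Hz. apply Rnot_lt_le. intro Hlt.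
    apply (unbdd h h1 beta L z Hb).
    - intros w Hw. split. apply Hder; lra.
      destruct (Rle_lt_or_eq_dec _ _ Hw). 2: { subst; exact Hlt. }
      apply Rnot_le_lt. intro Hw2.
      apply (nodip mu sigma r beta 1 h h1 h2 x0 z w Hs Hr Hb ltac:(lra)).
      + intros s Hs'. apply Hcont. lra.
      + intros s Hs'. split. apply Hder; lra. apply Hder2b; lra.
      + intros s Hs' Hn. rewrite <- (ind1 d s) by lra. apply Hode0; lra.
      + exact Hp0.
      + exact Hlt.
      + exact Hw2.
    - intros w Hw. apply HL. lra. }
  assert (Hne : exists t0, d < t0 /\ - beta <= h1 t0).
  { apply NNPP. intro Hn. apply (unbdd h h1 beta L (d + 1) Hb).
    - intros w Hw. split. apply Hder; lra. apply Rnot_le_lt. intro. apply Hn. exists w. split. lra. exact H.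
    - intros w Hw. apply HL. lra. }
  destruct Hne as [t0 [Ht0 Ht0']].
  set (E' := fun x => d <= x /\ forall t, d < t <= x -> h1 t < - beta).
  destruct (completeness E') as [zg [Hub' Hlub']].
  { exists t0. intros x [Hx1 Hx2]. apply Rnot_lt_le. intro. specialize (Hx2 t0 ltac:(lra)). lra. }
  { exists d. split. lra. intros t Ht. lra. }
  assert (Hzgd : d <= zg) by (apply Hub'; split; [lra | intros t Ht; lra]).
  assert (G1 : forall t, d < t < zg -> h1 t < - beta).
  { intros t Ht. apply Rnot_le_lt. intro Hle.
    assert (zg <= t).
    { apply Hlub'. intros x Hx. apply Rnot_lt_le. intro Hxt.
      assert (h1 t < - beta) by (apply Hx; lra). lra. }
    lra. }
  assert (G2 : d < zg -> h1 zg <= - beta).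
  { intros Hdz. apply Rnot_lt_le. intro Hlt.
    assert (Heps : 0 < h1 zg + beta) by lra.
    destruct (cont_eps h1 zg (Hcont zg ltac:(lra)) _ Heps) as [dl [Hdl Hdl']].
    set (t := zg - Rmin dl (zg - d) / 2).
    assert (Hm1 := Rmin_l dl (zg - d)). assert (Hm2 := Rmin_r dl (zg - d)).
    assert (0 < Rmin dl (zg - d)) by (apply Rmin_pos; lra).
    assert (Rabs (t - zg) < dl) by (unfold t; rewrite Rabs_left; lra).
    specialize (Hdl' t H0). apply Rabs_def2 in Hdl'.
    assert (h1 t < - beta) by (apply G1; unfold t; lra). lra. }
  assert (G3 : forall t, zg <= t -> d < t -> - beta <= h1 t).
  { intros t Ht Htd. apply Rnot_lt_le. intro Hlt.
    assert (Heps : 0 < - beta - h1 t) by lra.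
    destruct (cont_eps h1 t (Hcont t ltac:(lra)) _ Heps) as [dl [Hdl Hdl']].
    assert (E' (t + dl / 2)).
    { split. lra. intros s Hs'. apply Rnot_le_lt. intro Hle.
      destruct (Rlt_le_dec (t - dl) s).
      - assert (Rabs (s - t) < dl) by (apply Rabs_def1; lra).
        specialize (Hdl' s H). apply Rabs_def2 in Hdl'. lra.
      - assert (- beta <= h1 t) by (apply (CB s); lra). lra. }
    assert (t + dl / 2 <= zg) by (apply Hub'; exact H). lra. }
  assert (Hsg : 0 < sigma^2) by (apply pow_lt; lra).
  destruct (ode_form mu sigma r u0 (beta * u0 / r) h h1 h2 (fun z => 0 < z < zf) Hs Hr)
    as [A2 [B2 HfB]].
  { intros x y t Hx Hy Ht. lra. }
  { intros z Hz. split. apply Hder; lra. split. apply Hder2a; lra.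
    pose proof (Hodep z ltac:(lra) ltac:(pose proof (F1 z Hz); lra)) as E1.
    rewrite ind0 in E1 by lra. field_simplify_eq. 2: lra. field_simplify_eq in E1. lra. }
  destruct (ode_form mu sigma r 0 0 h h1 h2 (fun z => zf < z < d) Hs Hr)
    as [A1 [B1 HfL]].
  { intros x y t Hx Hy Ht. lra. }
  { intros z Hz. split. apply Hder; lra. split. apply Hder2a; lra.
    pose proof (Hodem z ltac:(lra) ltac:(pose proof (F3 z ltac:(lra)); lra)) as E1.
    rewrite ind0 in E1 by lra. lra. }
  destruct (ode_form mu sigma r 0 (- (1 / r)) h h1 h2 (fun z => d < z <= zg) Hs Hr)
    as [a1 [b1 HgL]].
  { intros x y t Hx Hy Ht. lra. }
  { intros z Hz. split. apply Hder; lra. split. apply Hder2b; lra.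
    assert (h1 z <= - beta).
    { destruct (Rle_lt_or_eq_dec _ _ (proj2 Hz)). apply Rlt_le, G1; lra. subst. apply G2; lra. }
    pose proof (Hodem z ltac:(lra) ltac:(lra)) as E1.
    rewrite ind1 in E1 by lra. field_simplify_eq. 2: lra. lra. }
  destruct (ode_form mu sigma r u0 ((beta * u0 - 1) / r) h h1 h2 (fun z => zg <= z /\ d < z) Hs Hr)
    as [a2 [b2 HgB]].
  { intros x y t Hx Hy Ht. lra. }
  { intros z Hz. split. apply Hder; lra. split. apply Hder2b; lra.
    pose proof (Hodep z ltac:(lra) ltac:(pose proof (G3 z (proj1 Hz) (proj2 Hz)); lra)) as E1.
    rewrite ind1 in E1 by lra. field_simplify_eq. 2: lra. field_simplify_eq in E1. lra. }
  exists zf, zg, A1, B1, A2, B2, a1, b1, a2, b2.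
  split. lra. split. lra.
  intros fl fb gl gb.
  assert (Hcfb : forall z, continuous fb z).
  { intros z. apply (ex_derive_continuous (V:=R_NormedModule)). unfold fb. auto_derive. auto. }
  assert (Hcfl : forall z, continuous fl z).
  { intros z. apply (ex_derive_continuous (V:=R_NormedModule)). unfold fl. auto_derive. auto. }
  split; [|split; [|split]].
  - intros z Hz.
    destruct (Rle_lt_or_eq_dec _ _ (proj1 Hz)) as [Hz0|Hz0].
    + destruct (Rle_lt_or_eq_dec _ _ (proj2 Hz)) as [Hz1|Hz1].
      * rewrite (HfB z ltac:(lra)). reflexivity.
      * subst z. apply (ext_left h fb zf zf ltac:(lra)).
        apply cont_left_eps. apply Hch. lra.
        apply cont_left_eps. apply Hcfb.
        intros t Ht. rewrite (HfB t ltac:(lra)). reflexivity.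
    + subst z. apply (ext_right h fb 0 zf ltac:(lra)).
      apply (rd_cont h (h1 0) Hrd0).
      apply cont_right_eps. apply Hcfb.
      intros t Ht. rewrite (HfB t ltac:(lra)). reflexivity.
  - intros z Hz.
    destruct (Rle_lt_or_eq_dec _ _ (proj2 Hz)) as [Hz1|Hz1].
    + rewrite (HfL z ltac:(lra)). unfold fl. ring.
    + subst z. apply (ext_left h fl d (d - zf) ltac:(lra)).
      apply cont_left_eps. apply Hch. lra.
      apply cont_left_eps. apply Hcfl.
      intros t Ht. rewrite (HfL t ltac:(lra)). unfold fl. ring.
  - intros z Hz. rewrite (HgL z Hz). reflexivity.
  - intros z Hz1 Hz2. rewrite (HgB z (conj Hz1 Hz2)). reflexivity.
Qed.
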